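(* Suppose that for $m=0$ and all $\mu\in\mathcal{P}(\overline{\mathbb{Z}})$, $$-I(\mu)\le\lim_{\varepsilon\to0^+}\liminf_{n\to\infty}\frac1n\log\mathbb{P}_m\big(\ell_n\in B(\mu,\varepsilon)\big)\quad\text{and}\quad\lim_{\varepsilon\to0^+}\limsup_{n\to\infty}\frac1n\log\mathbb{P}_m\big(\ell_n\in B(\mu,\varepsilon)\big)\le-I(\mu).$$ Then these two inequalities hold for all $m\in\mathbb{Z}$ and all $\mu\in\mathcal{P}(\overline{\mathbb{Z}})$.
   Context: $\overline{\mathbb{Z}}=\mathbb{Z}\cup\{-\infty,+\infty\}$ is the two-point compactification of $\mathbb{Z}$. Let $p:\mathbb{Z}\to[0,1]$ with $0<p(k)<1$ for all $k$ and limits $p_\pm=\lim_{k\to\pm\infty}p(k)\in(0,1)$. Under $\mathbb{P}_m$, $(S_n)_{n\ge1}$ is the Markov chain on $\overline{\mathbb{Z}}$ with $S_1=m$, $\pm\infty$ absorbing, $k\to k+1$ w.p. $p(k)$ and $k\to k-1$ w.p. $1-p(k)$ for $k\in\mathbb{Z}$; $\ell_n=\frac1n\sum_{j=1}^n\delta_{S_j}$. Metric on $\overline{\mathbb{Z}}$: $d(h,k)=|\varphi(h)-\varphi(k)|$ with $\varphi(\pm\infty)=\pm1$, $\varphi(k)=1-2^{-k}$ for $k\ge0$, $\varphi(k)=-1+2^{-|k|}$ for $k<0$. $\|\nu\|=\sup\{\int f\,d\nu: f\text{ 1-Lipschitz for }d,\ \sup|f|\le1\}$ and $B(\mu,\varepsilon)=\{\nu\in\mathcal{P}(\overline{\mathbb{Z}}):\|\nu-\mu\|<\varepsilon\}$.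 For $\mu=\alpha_-\delta_{-\infty}+\alpha_0\mu_0+\alpha_+\delta_{+\infty}$ ($\alpha_\sigma\ge0$ summing to 1, $\mu_0\in\mathcal{P}(\mathbb{Z})$), with $0\cdot\infty=0$: $I(\mu)=\alpha_0 I_{\mathrm{DV}}(\mu_0)+\min\{\alpha_- I^{p_-}_{\mathrm{Cr}}(0)+\alpha_+\inf_{x\in[0,1]}I^{p_+}_{\mathrm{Cr}}(x)\,;\,\alpha_+ I^{p_+}_{\mathrm{Cr}}(0)+\alpha_-\inf_{x\in[-1,0]}I^{p_-}_{\mathrm{Cr}}(x)\}$, where $I_{\mathrm{DV}}(\nu)=\sup_{u_k\ge1}\sum_{k}\nu(k)\log\frac{u_k}{p(k)u_{k+1}+(1-p(k))u_{k-1}}$ and $I^q_{\mathrm{Cr}}(x)=\frac{1-x}{2}\log\frac{1-x}{2(1-q)}+\frac{1+x}{2}\log\frac{1+x}{2q}$ on $[-1,1]$, $+\infty$ elsewhere. *)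

(* Defs.v *)
From HB Require Import structures.
From mathcomp Require Import all_boot all_order all_algebra.
From mathcomp Require Import all_classical all_reals all_analysis.
Set Implicit Arguments. Unset Strict Implicit. Unset Printing Implicit Defensive.
Import Order.TTheory GRing.Theory Num.Theory.
Import numFieldNormedType.Exports.
Local Open Scope classical_set_scope.
Local Open Scope ring_scope.

Inductive zbar := ZNinf | ZFin of int | ZPinf.

Section Defs.
Variable R : realType.

Definition phiZ (h : zbar) : R :=
  match h with
  | ZNinf => -1
  | ZPinf => 1
  | ZFin k => match k with
              | Posz n => 1 - (2 ^- n)
              | Negz n => -1 + (2 ^- n.+1)
              end
  end.

Definition dZ (h k : zbar) : R := `| phiZ h - phiZ k |.

(* Sum over Z of g, as the limit of the partial sums over [-N, N). *)
Definition zpartial (g : int -> R) (N : nat) : R :=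
  \sum_(i < N) (g (Posz i) + g (Negz i)).
Definition zsum (g : int -> R) : R := limn (zpartial g).

Definition is_prob (w : zbar -> R) : Prop :=
  (forall x, 0 <= w x) /\
  zpartial (fun k => w (ZFin k)) @ \oo --> 1 - w ZNinf - w ZPinf.

Definition zint (w : zbar -> R) (f : zbar -> R) : R :=
  w ZNinf * f ZNinf + w ZPinf * f ZPinf + zsum (fun k => w (ZFin k) * f (ZFin k)).

Definition lip1 (f : zbar -> R) : Prop :=
  (forall h k, `| f h - f k | <= dZ h k) /\ (forall x, `| f x | <= 1).

Definition zdist (nu mu : zbar -> R) : R :=
  sup [set zint nu f - zint mu f | f in lip1].

Definition in_ball (mu : zbar -> R) (eps : R) (nu : zbar -> R) : Prop :=
  zdist nu mu < eps.

(* The chain started at S_1 = m up to time n: steps s_1..s_{n-1} (true = +1).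
   Position S_{j+1} (j : 'I_n) after the first j steps. *)
Definition chain_pos (m : int) (n : nat) (s : {ffun 'I_n.-1 -> bool}) (j : nat) : int :=
  m + \sum_(i < n.-1 | (i < j)%N) (if s i then 1 else -1).

Definition path_prob (p : int -> R) (m : int) (n : nat) (s : {ffun 'I_n.-1 -> bool}) : R :=
  \prod_(i < n.-1) (if s i then p (chain_pos m s i) else 1 - p (chain_pos m s i)).

(* empirical measure ell_n = (1/n) sum_{j=1}^n delta_{S_j} (the chain started in Z
   never reaches +-oo in finite time) *)
Definition emp (m : int) (n : nat) (s : {ffun 'I_n.-1 -> bool}) (x : zbar) : R :=
  match x with
  | ZFin k => n%:R^-1 * #|[set j : 'I_n | chain_pos m s j == k]|%:R
  | _ => 0
  end.

Definition prob_ball (p : int -> R) (m : int) (mu : zbar -> R) (eps : R) (n : nat) : R :=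
  \sum_(s : {ffun 'I_n.-1 -> bool})
     (if `[< in_ball mu eps (emp m s) >] then path_prob p m s else 0).

Definition lograte (P : R) (n : nat) : \bar R :=
  if 0 < P then ((n%:R)^-1 * ln P)%:E else -oo%E.

Definition lower_bd (p : int -> R) (m : int) (mu : zbar -> R) : \bar R :=
  lim ((fun eps => limn_einf (fun n => lograte (prob_ball p m mu eps n) n)) @ 0^'+).
Definition upper_bd (p : int -> R) (m : int) (mu : zbar -> R) : \bar R :=
  lim ((fun eps => limn_esup (fun n => lograte (prob_ball p m mu eps n) n)) @ 0^'+).

Definition xlogy (a b : R) : R := if a == 0 then 0 else a * ln (a / b).

Definition I_Cr (q x : R) : \bar R :=
  if (-1 <= x <= 1) then
    (xlogy ((1 - x) / 2) (1 - q) + xlogy ((1 + x) / 2) q)%:E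
  else +oo%E.

Definition DV_term (p : int -> R) (nu : int -> R) (u : int -> R) (k : int) : R :=
  nu k * ln (u k / (p k * u (k + 1) + (1 - p k) * u (k - 1))).
Definition DV_sum (p : int -> R) (nu : int -> R) (u : int -> R) : \bar R :=
  ((\esum_(k in [set: int]) (Num.max (DV_term p nu u k) 0)%:E)
   - (\esum_(k in [set: int]) (Num.max (- DV_term p nu u k) 0)%:E))%E.
Definition I_DV (p : int -> R) (nu : int -> R) : \bar R :=
  ereal_sup [set DV_sum p nu u | u in [set u : int -> R | forall k, 1 <= u k]].

Definition rateI (p : int -> R) (pm pp : R) (w : zbar -> R) : \bar R :=
  let am := w ZNinf in
  let ap := w ZPinf in
  let a0 := 1 - am - ap in
  ((a0%:E * I_DV p (fun k => (w (ZFin k) / a0)%R)) +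
   Order.min (am%:E * I_Cr pm 0 + ap%:E * ereal_inf [set I_Cr pp x | x in `[0%R, 1%R]])
             (ap%:E * I_Cr pp 0 + am%:E * ereal_inf [set I_Cr pm x | x in `[(-1)%R, 0%R]]))%E.

End Defs.

(* Main.v *)
Require Import Defs.
From HB Require Import structures.
From mathcomp Require Import all_boot all_order all_algebra.
From mathcomp Require Import all_classical all_reals all_analysis.
From mathcomp Require Import ring lra.
Set Implicit Arguments. Unset Strict Implicit. Unset Printing Implicit Defensive.
Import Order.TTheory GRing.Theory Num.Theory.
Import numFieldNormedType.Exports.
Local Open Scope classical_set_scope.
Local Open Scope ring_scope.

Section Comb.
Variable R : realType.

Definition consf k (d : bool) (s : {ffun 'I_k -> bool}) : {ffun 'I_k.+1 -> bool} :=
  [ffun i => if unlift ord0 i is Some j then s j else d].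

Lemma consf0 k d (s : {ffun 'I_k -> bool}) : consf d s ord0 = d.
Proof. by rewrite ffunE unlift_none. Qed.

Lemma consfS k d (s : {ffun 'I_k -> bool}) j : consf d s (lift ord0 j) = s j.
Proof. by rewrite ffunE liftK. Qed.

Definition stp (d : bool) : int := if d then 1 else -1.

Lemma chain_pos0 m n (s : {ffun 'I_n.-1 -> bool}) : chain_pos m s 0 = m.
Proof. by rewrite /chain_pos big1 ?addr0. Qed.

Lemma chain_pos_cons m k d (s : {ffun 'I_k -> bool}) j :
  @chain_pos m k.+2 (consf d s) j.+1 = @chain_pos (m + stp d) k.+1 s j.
Proof.
rewrite /chain_pos /= big_mkcond big_ord_recl /= consf0 -addrA; congr (_ + _).
rewrite [in RHS]big_mkcond; congr (_ + _).
by apply: eq_bigr => i _; rewrite consfS /bump leq0n add1n ltnS.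
Qed.

Lemma path_prob_cons (p : int -> R) m k d (s : {ffun 'I_k -> bool}) :
  @path_prob R p m k.+2 (consf d s) =
  (if d then p m else 1 - p m) * @path_prob R p (m + stp d) k.+1 s.
Proof.
rewrite /path_prob /= big_ord_recl /= consf0 -/(chain_pos m _ 0) chain_pos0.
congr (_ * _); apply: eq_bigr => i _.
by rewrite consfS -(chain_pos_cons m d s i) /bump leq0n add1n.
Qed.

Lemma sum_consf k (F : {ffun 'I_k.+1 -> bool} -> R) :
  \sum_(s : {ffun 'I_k.+1 -> bool}) F s =
  \sum_(d : bool) \sum_(s : {ffun 'I_k -> bool}) F (consf d s).
Proof.
rewrite pair_big /=.
pose g (x : bool * {ffun 'I_k -> bool}) := consf x.1 x.2.
pose h (s : {ffun 'I_k.+1 -> bool}) := (s ord0, [ffun j => s (lift ord0 j)]).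
rewrite (reindex g) /=; last first.
  apply: onW_bij; exists h.
    by case=> d s; rewrite /g /h consf0 /=; congr pair; apply/ffunP => j; rewrite ffunE consfS.
  move=> s; apply/ffunP => i; rewrite /g /h /= ffunE.
  by case: unliftP => [j ->|->]; rewrite ?ffunE.
by [].
Qed.


Variable p : int -> R.
Hypothesis hp : forall k, 0 < p k < 1.

Lemma path_prob_ge0 m n (s : {ffun 'I_n.-1 -> bool}) : 0 <= path_prob p m s.
Proof.
apply: prodr_ge0 => i _; have /andP[h0 h1] := hp (chain_pos m s i).
by case: (s i); rewrite ?subr_ge0 ltW.
Qed.

Lemma sum_path_prob k m :
  \sum_(s : {ffun 'I_k -> bool}) @path_prob R p m k.+1 s = 1.
Proof.
elim: k m => [|k IH] m.
  rewrite (eq_bigr (fun _ => 1)); last by move=> s _; rewrite /path_prob big_ord0.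
  by rewrite sumr_const card_ffun /= card_bool card_ord expn0.
rewrite sum_consf big_bool /=.
under eq_bigr do rewrite path_prob_cons.
under [X in _ + X]eq_bigr do rewrite path_prob_cons.
by rewrite /= -!mulr_sumr !IH !mulr1 addrC subrK.
Qed.

Lemma prob_ball_ge0 m mu eps n : 0 <= prob_ball p m mu eps n.
Proof. by apply: sumr_ge0 => s _; case: ifP => // _; exact: path_prob_ge0. Qed.

Lemma prob_ball_le1 m mu eps n : prob_ball p m mu eps n <= 1.
Proof.
case: n => [|k].
  rewrite /prob_ball; apply: le_trans (_ : \sum_(s : {ffun 'I_0 -> bool}) 1 <= 1).
    apply: ler_sum => s _; case: ifP => // _; rewrite /path_prob big_ord0 //.
  by rewrite sumr_const card_ffun /= card_bool card_ord expn0.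
rewrite -(sum_path_prob k m) /prob_ball; apply: ler_sum => s _.
by case: ifP => // _; exact: path_prob_ge0.
Qed.

Lemma prob_ball_mono m mu eps eps' n : eps <= eps' ->
  prob_ball p m mu eps n <= prob_ball p m mu eps' n.
Proof.
move=> ee; apply: ler_sum => s _.
case: (asboolP (in_ball mu eps (emp R m s))) => h.
  by rewrite asboolT //; exact: lt_le_trans ee.
by case: ifP => // _; exact: path_prob_ge0.
Qed.


Lemma inner_sum (z : int) (c : R) N : (absz z < N)%N ->
  \sum_(i < N) ((if z == Posz i then c else 0) + (if z == Negz i then c else 0)) = c.
Proof.
move=> zN; rewrite big_split /=.
case: z zN => a /= aN.
  rewrite [X in _ + X]big1 ?addr0; last by move=> i _.
  rewrite (bigD1 (Ordinal aN)) //= eqxx big1 ?addr0 // => i /eqP hi.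
  case: ifP => // /eqP [] ai; case: hi; exact: val_inj.
rewrite [X in X + _]big1 ?add0r; last by move=> i _.
have aN' : (a < N)%N by apply: ltn_trans aN.
rewrite (bigD1 (Ordinal aN')) //= eqxx big1 ?addr0 // => i /eqP hi.
case: ifP => // /eqP [] ai; case: hi; exact: val_inj.
Qed.

Lemma zint_emp m n (s : {ffun 'I_n.-1 -> bool}) f :
  zint (emp R m s) f = n%:R^-1 * \sum_(j < n) f (ZFin (chain_pos m s j)).
Proof.
pose F (j : 'I_n) := f (ZFin (chain_pos m s j)).
have eg : (fun k => emp R m s (ZFin k) * f (ZFin k)) = fun k =>
   n%:R^-1 * \sum_(j < n) (if chain_pos m s j == k then F j else 0).
  apply: funext => k.
  rewrite /= -mulrA; congr (_ * _).
  rewrite -sumr_const big_mkcond /= mulr_suml; apply: eq_bigr => j _.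
  rewrite unfold_in /in_set /= asboolb; case: eqP => [<-|]; by rewrite ?mul1r ?mul0r.
rewrite /zint eg (_ : emp R m s ZNinf = 0) // (_ : emp R m s ZPinf = 0) //.
rewrite !mul0r !add0r /zsum.
apply: lim_near_cst => //.
exists (\max_(j < n) (absz (chain_pos m s j))).+1 => // N /= hN.
rewrite /zpartial.
rewrite (eq_bigr (fun i : 'I_N => n%:R^-1 * \sum_(j < n) ((if chain_pos m s j == Posz i then F j else 0) + (if chain_pos m s j == Negz i then F j else 0)))); last first.
  by move=> i _; rewrite big_split mulrDr.
rewrite -mulr_sumr exchange_big /=; congr (_ * _); apply: eq_bigr => j _.
apply: inner_sum; apply: leq_ltn_trans hN.
exact: (@leq_bigmax _ (fun j : 'I_n => absz (chain_pos m s j)) j).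
Qed.


Lemma lip1_0 : lip1 (fun _ : zbar => (0 : R)).
Proof. by split => [h k|x]; rewrite ?subr0 normr0 // /dZ normr_ge0. Qed.

Lemma zdist_shift (nu nu' mu : zbar -> R) (δ : R) : 0 <= δ ->
  (forall f, lip1 f -> `|zint nu f - zint nu' f| <= δ) ->
  zdist nu mu <= zdist nu' mu + δ.
Proof.
move=> d0 hd; rewrite /zdist.
set S := [set zint nu f - zint mu f | f in @lip1 R].
set S' := [set zint nu' f - zint mu f | f in @lip1 R].
have key f : lip1 f -> zint nu f - zint mu f <= (zint nu' f - zint mu f) + δ.
  move=> lf; have := hd f lf; have := ler_norm (zint nu f - zint nu' f); lra.
have [hub|hub] := pselect (has_ubound S').
  apply: ge_sup; first by exists (zint nu (fun _ => 0) - zint mu (fun _ => 0)); exists (fun _ => 0) => //; exact: lip1_0.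
  move=> _ [f lf <-]; apply: le_trans (key f lf) _; rewrite lerD2r.
  by apply: (ub_le_sup hub); exists f.
have hS : ~ has_ubound S.
  move=> [M hM]; apply: hub; exists (M + δ) => _ [f lf <-].
  have := hd f lf; have := ler_norm (zint nu' f - zint nu f); rewrite distrC.
  have : zint nu f - zint mu f <= M by apply: hM; exists f.
  lra.
rewrite !sup_out ?add0r //; by move=> [].
Qed.

Lemma sum_f_bound n (g : 'I_n -> R) : (forall j, `|g j| <= 1) -> `|\sum_(j < n) g j| <= n%:R.
Proof.
move=> hg; apply: le_trans (ler_norm_sum _ _ _) _.
apply: le_trans (_ : \sum_(j < n) (1 : R) <= _); first by apply: ler_sum => j _.
by rewrite sumr_const card_ord.
Qed.

Lemma emp_cons_close a k d (s : {ffun 'I_k -> bool}) f : lip1 f ->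
  `|zint (@emp R a k.+2 (consf d s)) f - zint (@emp R (a + stp d) k.+1 s) f| <= 2 / (k.+2)%:R.
Proof.
move=> [_ hf]; rewrite !zint_emp big_ord_recl /= -/(chain_pos a _ 0) chain_pos0.
set T := (X in _ * (_ + X)).
have -> : T = \sum_(j < k.+1) f (ZFin (@chain_pos (a + stp d) k.+1 s j)).
  by apply: eq_bigr => j _; rewrite -chain_pos_cons /bump leq0n add1n.
move: T => _.
have hT := sum_f_bound (fun j : 'I_k.+1 => hf (ZFin (@chain_pos (a + stp d) k.+1 s j))).
move: hT; set T := \sum_(j < k.+1) _ => hT.
have hx := hf (ZFin a); move: hx; set x := f (ZFin a) => hx.
rewrite mulrSr; set N := (k.+1)%:R.
have N0 : 0 < N by rewrite ltr0n.
have -> : (N + 1)^-1 * (x + T) - N^-1 * T = (x - T / N) / (N + 1).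
  by field; apply/andP; split; rewrite ?gt_eqF // ltr_wpDl.
rewrite normrM normfV (gtr0_norm (_ : 0 < N + 1)); last by rewrite ltr_wpDl.
rewrite ler_pM2r ?invr_gt0 ?ltr_wpDl //.
apply: le_trans (ler_normB _ _) _.
rewrite normrM normfV (gtr0_norm N0).
have : `|T| / N <= 1 by rewrite ler_pdivrMr // mul1r.
move=> h; apply: le_trans (lerD hx h) _; lra.
Qed.


Lemma key_ineq a d mu eps k :
  (if d then p a else 1 - p a) * @prob_ball R p (a + stp d) mu eps k.+1 <=
  @prob_ball R p a mu (eps + 2 / (k.+2)%:R) k.+2.
Proof.
have q0 : 0 <= (if d then p a else 1 - p a).
  by have /andP[h0 h1] := hp a; case: d; rewrite ?subr_ge0 ltW.
rewrite /prob_ball sum_consf (bigD1 d) //=.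
apply: ler_wpDr.
  apply: sumr_ge0 => d' _; apply: sumr_ge0 => s _; case: ifP => // _.
  exact: path_prob_ge0.
rewrite mulr_sumr; apply: ler_sum => s _.
case: (asboolP (in_ball mu eps (@emp R (a + stp d) k.+1 s))) => h.
  rewrite asboolT ?path_prob_cons //.
  rewrite /in_ball in h *.
  apply: le_lt_trans (@zdist_shift _ (@emp R (a + stp d) k.+1 s) _ (2 / (k.+2)%:R) _ _) _.
  - by rewrite divr_ge0 // ler0n.
  - by move=> f lf; exact: emp_cons_close.
  by rewrite ltrD2r.
rewrite mulr0; case: ifP => // _; exact: path_prob_ge0.
Qed.


Local Open Scope ereal_scope.

Lemma einf_le_shift (u v : (\bar R)^nat) N :
  (forall n, (N <= n)%N -> u n <= v n.+1) -> limn_einf u <= limn_einf v.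
Proof.
move=> huv; rewrite !limn_einf_lim (cvg_lim _ (@cvg_einfs_sup _ u)) //.
rewrite (cvg_lim _ (@cvg_einfs_sup _ v)) //.
apply: ge_ereal_sup => _ [n _ <-].
apply: (@le_trans _ _ (einfs u (n + N)%N)).
  by apply: nondecreasing_einfs; rewrite leq_addr.
apply: (@le_trans _ _ (einfs v (n + N)%N.+1)); last by apply: ereal_sup_ubound; exists (n + N)%N.+1.
apply: le_ereal_inf_tmp => _ [k /= hk <-].
case: k hk => // k hk.
apply: le_trans (huv k _); last first.
  by apply: leq_trans (leq_addl n N) _; rewrite -ltnS.
by apply: ereal_inf_lbound; exists k => //=; rewrite -ltnS.
Qed.

Lemma esup_le_shift (u v : (\bar R)^nat) N :
  (forall n, (N <= n)%N -> u n <= v n.+1) -> limn_esup u <= limn_esup v.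
Proof.
move=> huv; rewrite !limn_esup_lim (cvg_lim _ (@cvg_esups_inf _ u)) //.
rewrite (cvg_lim _ (@cvg_esups_inf _ v)) //.
apply: le_ereal_inf_tmp => _ [m _ <-].
apply: ge_ereal_inf; exists (esups u (m + N)%N); first by exists (m + N)%N.
apply: ge_ereal_sup => _ [k /= hk <-].
apply: le_trans (huv k _) _; first by apply: leq_trans hk; rewrite leq_addl.
apply: ereal_sup_ubound; exists k.+1 => //=.
by apply: leq_trans (leq_addr N m) _; apply: leq_trans hk _.
Qed.

Lemma limn_esup_shift (w : (\bar R)^nat) (c : R) :
  limn_esup (fun n => c%:E + w n) = c%:E + limn_esup w.
Proof.
have E (u : (\bar R)^nat) : limn_esup u = - limn_einf (-%E \o u) by rewrite limn_einfN oppeK.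
rewrite E (E w).
have -> : (-%E \o (fun n => c%:E + w n)) = (fun n => (- c)%:E + (-%E \o w) n).
  by apply: funext => n /=; rewrite oppeD.
by rewrite limn_einf_shift // oppeD // EFinN oppeK.
Qed.

Lemma lim_compare (w v : (\bar R)^nat) :
  (forall d : R, (0 < d)%R -> exists N, forall n, (N <= n)%N -> w n <= d%:E + v n.+1) ->
  limn_einf w <= limn_einf v /\ limn_esup w <= limn_esup v.
Proof.
move=> H; split; apply/lee_addgt0Pr => d d0; rewrite addeC; have [N hN] := H d d0.
  by rewrite -limn_einf_shift //; exact: einf_le_shift hN.
by rewrite -limn_esup_shift; exact: esup_le_shift hN.
Qed.


Lemma einf_le_pt (u v : (\bar R)^nat) :
  (forall n, u n <= v n) -> limn_einf u <= limn_einf v.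
Proof.
move=> huv; rewrite !limn_einf_lim (cvg_lim _ (@cvg_einfs_sup _ u)) //.
rewrite (cvg_lim _ (@cvg_einfs_sup _ v)) //.
apply: ge_ereal_sup => _ [n _ <-].
apply: (@le_trans _ _ (einfs v n)); last by apply: ereal_sup_ubound; exists n.
apply: le_ereal_inf_tmp => _ [k /= hk <-].
by apply: le_trans (huv k); apply: ereal_inf_lbound; exists k.
Qed.

Lemma esup_le_pt (u v : (\bar R)^nat) :
  (forall n, u n <= v n) -> limn_esup u <= limn_esup v.
Proof.
move=> huv; rewrite !limn_esup_lim (cvg_lim _ (@cvg_esups_inf _ u)) //.
rewrite (cvg_lim _ (@cvg_esups_inf _ v)) //.
apply: le_ereal_inf_tmp => _ [m _ <-].
apply: ge_ereal_inf; exists (esups u m); first by exists m.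
apply: ge_ereal_sup => _ [k /= hk <-].
by apply: le_trans (huv k) _; apply: ereal_sup_ubound; exists k.
Qed.

Lemma lograte_mono (P P' : R) n : (0 <= P <= P')%R -> lograte P n <= lograte P' n.
Proof.
move=> /andP[P0 PP]; rewrite /lograte; case: ifPn => [Pp|]; last by rewrite leNye.
have P'p : (0 < P')%R by apply: lt_le_trans PP.
rewrite P'p lee_fin; apply: ler_wpM2l; first by rewrite invr_ge0 ler0n.
by rewrite ler_ln ?posrE.
Qed.

Lemma step_ineq x d mu eps eps' (δ : R) k :
  (2 / (k.+2)%:R <= eps' - eps)%R ->
  (- ln (if d then p x else 1 - p x) / (k.+1)%:R <= δ)%R ->
  lograte (prob_ball p (x + stp d) mu eps k.+1) k.+1 <=
  δ%:E + lograte (prob_ball p x mu eps' k.+2) k.+2.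
Proof.
set q := (if d then p x else 1 - p x)%R => he hd.
have /andP[q0 q1] : (0 < q <= 1)%R.
  by have /andP[h0 h1] := hp x; rewrite /q; case: (d); rewrite ?subr_gt0 ?gerBl ?ltW ?h0 ?h1.
rewrite /lograte; case: ifPn => [Py0|]; last by rewrite leNye.
set Py := prob_ball p (x + stp d) mu eps k.+1 in Py0 *.
set Px := prob_ball p x mu eps' k.+2.
have hPx : (q * Py <= Px)%R.
  apply: le_trans (key_ineq x d mu eps k) _; apply: prob_ball_mono.
  by move: he; rewrite lerBrDl.
have Px0 : (0 < Px)%R by apply: lt_le_trans hPx; rewrite mulr_gt0.
rewrite Px0 -EFinD lee_fin.
have hB : (ln q + ln Py <= ln Px)%R.
  by rewrite -lnM ?posrE // ler_ln ?posrE ?mulr_gt0.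
have A0 : (ln Py <= 0)%R by apply: ln_le0; exact: prob_ball_le1.
have B0 : (ln Px <= 0)%R by apply: ln_le0; exact: prob_ball_le1.
set α := (((k.+1)%:R : R)^-1)%R; set β := (((k.+2)%:R : R)^-1)%R.
have a0 : (0 <= α)%R by rewrite invr_ge0 ler0n.
have ba : (β <= α)%R by rewrite lef_pV2 ?posrE ?ltr0n // ler_nat.
have h1 : (α * ln Py <= α * ln Px + α * (- ln q))%R.
  by rewrite -mulrDr; apply: ler_wpM2l => //; lra.
have h2 : (α * ln Px <= β * ln Px)%R by rewrite ![(_ * ln Px)%R]mulrC ler_wnM2l.
have h3 : (α * (- ln q) <= δ)%R by rewrite mulrC.
lra.
Qed.


Lemma lim_right_le (f g : R -> \bar R) :
  (forall a b, (0 < a)%R -> (a <= b)%R -> f a <= f b) ->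
  (forall a b, (0 < a)%R -> (a <= b)%R -> g a <= g b) ->
  (forall e e', (0 < e)%R -> (e < e')%R -> g e <= f e') ->
  lim (g @ (0%R : R)^'+) <= lim (f @ (0%R : R)^'+).
Proof.
move=> fm gm hgf.
have cv (h : R -> \bar R) : (forall a b, (0 < a)%R -> (a <= b)%R -> h a <= h b) ->
    lim (h @ (0%R : R)^'+) = ereal_inf (h @` [set` Interval (BRight (0%R : R)) (BInfty _ false)]).
  move=> hm; apply: cvg_lim => //; apply: nondecreasing_at_right_cvge => //.
  move=> a b; rewrite !in_itv /= !andbT => a0 b0 ab; exact: hm.
rewrite (cv f fm) (cv g gm).
apply: le_ereal_inf_tmp => _ [e' /= he' <-].
move: he'; rewrite in_itv /= andbT => e'0.
apply: ge_ereal_inf; exists (g (e' / 2)%R).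
  by exists (e' / 2)%R => //=; rewrite in_itv /= andbT divr_gt0.
by apply: hgf; rewrite ?divr_gt0 // ltr_pdivrMr // ltr_pMr // ltr1n.
Qed.

Definition Lf m mu eps := limn_einf (fun n => lograte (prob_ball p m mu eps n) n).
Definition Uf m mu eps := limn_esup (fun n => lograte (prob_ball p m mu eps n) n).

Lemma adj_ineq x d mu :
  lower_bd p (x + stp d) mu <= lower_bd p x mu /\
  upper_bd p (x + stp d) mu <= upper_bd p x mu.
Proof.
set q := (if d then p x else 1 - p x)%R.
have mono y a b : (0 < a)%R -> (a <= b)%R -> forall n,
    lograte (prob_ball p y mu a n) n <= lograte (prob_ball p y mu b n) n.
  move=> _ ab n; apply: lograte_mono; rewrite prob_ball_ge0; exact: prob_ball_mono.
have cmp e e' : (0 < e)%R -> (e < e')%R ->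
    Lf (x + stp d) mu e <= Lf x mu e' /\ Uf (x + stp d) mu e <= Uf x mu e'.
  move=> e0 ee; apply: lim_compare => δ δ0.
  pose M := (2 / (e' - e) + (- ln q) / δ)%R.
  have q0 : (0 < q <= 1)%R.
    by have /andP[h0 h1] := hp x; rewrite /q; case: (d); rewrite ?subr_gt0 ?gerBl ?ltW ?h0 ?h1.
  have lnq : (0 <= - ln q)%R by rewrite oppr_ge0 ln_le0 //; case/andP: q0.
  have ee0 : (0 < e' - e)%R by rewrite subr_gt0.
  have t1 : (0 <= 2 / (e' - e))%R by rewrite divr_ge0 // ltW.
  have t2 : (0 <= (- ln q) / δ)%R by rewrite divr_ge0 // ltW.
  have M0 : (0 <= M)%R by rewrite addr_ge0.
  exists (Num.bound M) => n hn.
  have hM : (M < n%:R)%R.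
    by apply: lt_le_trans (archi_boundP M0) _; rewrite ler_nat.
  case: n hn hM => [|k] hn hM.
    by move: hM; rewrite ltNge M0.
  apply: step_ineq.
    rewrite ler_pdivrMr ?ltr0n // mulrC -ler_pdivrMr //.
    have : (2 / (e' - e) <= (k.+1)%:R)%R by rewrite /M in hM; lra.
    move=> h; apply: le_trans h _; rewrite ler_nat //.
  rewrite ler_pdivrMr ?ltr0n // mulrC -ler_pdivrMr //.
  by rewrite /M in hM; lra.
split; apply: lim_right_le.
- by move=> a b a0 ab; apply: einf_le_pt; exact: mono.
- by move=> a b a0 ab; apply: einf_le_pt; exact: mono.
- by move=> e e' e0 ee; case: (cmp e e' e0 ee).
- by move=> a b a0 ab; apply: esup_le_pt; exact: mono.
- by move=> a b a0 ab; apply: esup_le_pt; exact: mono.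
- by move=> e e' e0 ee; case: (cmp e e' e0 ee).
Qed.


Lemma bd_succ m mu :
  lower_bd p (m + stp true) mu = lower_bd p m mu /\
  upper_bd p (m + stp true) mu = upper_bd p m mu.
Proof.
have [l1 u1] := adj_ineq m true mu.
have [l2 u2] := adj_ineq (m + stp true) false mu.
have e : (m + stp true + stp false)%R = m by rewrite /stp addrK.
rewrite e in l2 u2.
move: l1 l2 u1 u2.
move: (lower_bd p (m + stp true) mu) (lower_bd p m mu) => x y h1 h2.
move: (upper_bd p (m + stp true) mu) (upper_bd p m mu) => z w h3 h4.
by split; apply/eqP; rewrite eq_le ?h1 ?h2 ?h3 ?h4.
Qed.

Lemma bd_all m mu :
  lower_bd p m mu = lower_bd p 0 mu /\ upper_bd p m mu = upper_bd p 0 mu.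
Proof.
case: m => n.
  elim: n => [|n [IHl IHu]]; first by split.
  have [a b] := bd_succ n mu.
  have e : (Posz n + stp true)%R = Posz n.+1 by rewrite /stp -addn1.
  rewrite e in a b.
  split; [exact: (etrans a IHl) | exact: (etrans b IHu)].
elim: n => [|n [IHl IHu]].
  have [a b] := bd_succ (Negz 0) mu.
  have e : (Negz 0 + stp true)%R = 0%R by [].
  rewrite e in a b.
  split; [exact: (esym a) | exact: (esym b)].
have [a b] := bd_succ (Negz n.+1) mu.
have e : (Negz n.+1 + stp true)%R = Negz n.
  rewrite /stp NegzE [Negz n]NegzE -[(n.+2)%N]addn1 PoszD opprD subrK //.
rewrite e in a b.
split; [exact: (etrans (esym a) IHl) | exact: (etrans (esym b) IHu)].
Qed.

End Comb.

Unset Implicit Arguments. Set Strict Implicit. Set Printing Implicit Defensive.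
Local Close Scope ereal_scope.
Local Open Scope ring_scope.

Theorem lemma2p2 (R : realType) (p : int -> R) (pm pp : R)
  (hp : forall k, 0 < p k < 1)
  (hpm : 0 < pm < 1) (hpp : 0 < pp < 1)
  (cvg_pp : (fun n : nat => p (Posz n)) @ \oo --> pp)
  (cvg_pm : (fun n : nat => p (- Posz n)) @ \oo --> pm) :
  (forall mu : zbar -> R, is_prob mu ->
     (- rateI p pm pp mu <= lower_bd p 0 mu)%E /\
     (upper_bd p 0 mu <= - rateI p pm pp mu)%E) ->
  forall (m : int) (mu : zbar -> R), is_prob mu ->
     (- rateI p pm pp mu <= lower_bd p m mu)%E /\
     (upper_bd p m mu <= - rateI p pm pp mu)%E.

Proof.
move=> H m mu hmu.
have [a b] := bd_all hp m mu.
split; [rewrite a; exact: (proj1 (H mu hmu)) | rewrite b; exact: (proj2 (H mu hmu))].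
Qed.
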